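(* Let $\alpha\in(0,\pi/2]$ and consider the system of two nonlinear equations in the unknowns $d$ and $u_1$ \begin{align*} &3(1+\cos\alpha) d^2 + 8\cos\left(\frac{\alpha}{2}\right)d u_1 + 6u_1^2 - 10(1+\alpha\csc\alpha)=0,\\ &4 d^6 - 24 d^4 + 57 d^2 - 12\sec\left(\frac{\alpha}{2}\right) d (d^2-3) u_1 + 9\sec^2\left(\frac{\alpha}{2}\right)u_1^2 + 105\csc^2\left(\frac{\alpha}{2}\right)\left(1-\alpha\csc\alpha\right)=0. \end{align*} Let $p(x)=p_1(\sqrt{x})$, where \begin{align*} p_1(d)&=-32 \sin^6\alpha\, d^{12} +256 \sin^6\alpha\,d^{10} -1184 \sin^6\alpha\,d^{8}\\ &-96 \sin^3\alpha\,(-40 \alpha +9 \sin\alpha +20 \sin2\alpha+7\sin3\alpha -30 \alpha \cos\alpha)\,d^{6}\\ &+96 \sin^3\alpha\,(-160\alpha +99 \sin\alpha +80 \sin2\alpha+7 \sin3\alpha -120\alpha \cos\alpha)\,d^{4}\\ &+13440 (\alpha -\sin\alpha)\sin^5\alpha\, \csc^2\left(\frac{\alpha }{2}\right)\,d^{2} -1800 \left(6\alpha +8\alpha\cos\alpha -2\sin\alpha(3\cos\alpha+4)\right)^2 . \end{align*} Then the number of real solutions $(d,u_1)$ of this system with $d>0$ is the same as the number of positive zeros of $p$.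
   Context: Interpolation of $G^2$ data (two points, tangent directions, curvatures) and arc length by Pythagorean-hodograph curves of degree 7, with hodograph $\mathbf{w}^2$ where $\mathbf{w}$ is a complex cubic with Bernstein coefficients $\mathbf{w}_0,\dots,\mathbf{w}_3$, $\mathbf{w}_0 = d\,e^{i\theta_0/2}$, $\mathbf{w}_3=d\,e^{i\theta_1/2}$, $\mathbf{w}_1=u_1+iv_1$, $\mathbf{w}_2=u_2+iv_2$. Data are taken from a circular arc of inner angle $2\alpha$ in canonical position ($\theta_0=-\theta_1=\alpha$, $\kappa_0=\kappa_1=-2\sin\alpha$, $L=\alpha\csc\alpha$), and the symmetric case $u_1=u_2$ (hence $v_2=-v_1$) is considered, which reduces the problem to the system above. Here $\csc=1/\sin$, $\sec=1/\cos$. *)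

(* Defs.v *)
From mathcomp Require Import all_boot all_order all_algebra.
From mathcomp Require Import all_classical all_reals all_analysis.
Set Implicit Arguments. Unset Strict Implicit. Unset Printing Implicit Defensive.
Import Order.TTheory GRing.Theory Num.Theory.
Local Open Scope ring_scope.

Section Defs.
Variable R : realType.

Definition csc (x : R) : R := 1 / sin x.
Definition sec (x : R) : R := 1 / cos x.

Definition eq1 (a d u1 : R) : R :=
  3 * (1 + cos a) * d ^+ 2 + 8 * cos (a / 2) * d * u1 + 6 * u1 ^+ 2
  - 10 * (1 + a * csc a).

Definition eq2 (a d u1 : R) : R :=
  4 * d ^+ 6 - 24 * d ^+ 4 + 57 * d ^+ 2
  - 12 * sec (a / 2) * d * (d ^+ 2 - 3) * u1
  + 9 * sec (a / 2) ^+ 2 * u1 ^+ 2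
  + 105 * csc (a / 2) ^+ 2 * (1 - a * csc a).

Definition p1 (a d : R) : R :=
  - 32 * sin a ^+ 6 * d ^+ 12 + 256 * sin a ^+ 6 * d ^+ 10
  - 1184 * sin a ^+ 6 * d ^+ 8
  - 96 * sin a ^+ 3 * (- 40 * a + 9 * sin a + 20 * sin (2 * a)
                        + 7 * sin (3 * a) - 30 * a * cos a) * d ^+ 6
  + 96 * sin a ^+ 3 * (- 160 * a + 99 * sin a + 80 * sin (2 * a)
                        + 7 * sin (3 * a) - 120 * a * cos a) * d ^+ 4
  + 13440 * (a - sin a) * sin a ^+ 5 * csc (a / 2) ^+ 2 * d ^+ 2
  - 1800 * (6 * a + 8 * a * cos a - 2 * sin a * (3 * cos a + 4)) ^+ 2.

Definition p (a x : R) : R := p1 a (Num.sqrt x).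

End Defs.

(* Main.v *)
Require Import Defs.
From mathcomp Require Import all_boot all_order all_algebra.
From mathcomp Require Import all_classical all_reals all_analysis.
From mathcomp Require Import ring lra.
Import Order.TTheory GRing.Theory Num.Theory numFieldNormedType.Exports.
Local Open Scope classical_set_scope.
Local Open Scope ring_scope.

Lemma sin_le_id (R : realType) (y : R) : 0 <= y -> sin y <= y.
Proof.
move=> y0.
have hc : continuous (fun x : R => x - sin x).
  by move=> x; apply: cvgB => //; exact: continuous_sin.
have [|c _ h] := @MVT_segment R (fun x : R => x - sin x) (fun x => 1 - cos x) 0 y y0
  (fun x _ => is_deriveB _ _).
  exact: (continuous_subspaceT hc).
move: h => /=; rewrite sin0 subr0 subr0 => h.
have := cos_le1 c => hc1.
rewrite -subr_ge0 h; apply: mulr_ge0 => //; lra.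
Qed.

Lemma hpos (R : realFieldType) (q : R) : 23/25 <= q -> q <= 1 ->
  0 < -4*(64*(2*q^+2-1)^+2+30)*(2*q^+2-1)*q^+3*(1+q) - 120*q^+2*(1+q) + 210*(2*q^+2-1)^+2*(1+2*q+2*q^+2).
Proof.
move=> h0 h1.
have e0 : 0 <= 1 - q by lra.
have e1 : 1 - q <= 2/25 by lra.
have -> : q = 1 - (1 - q) by ring.
move: (1 - q) e0 e1 => e e0 e1; clear h0 h1.
have p2 : 0 <= e^+2 by nra.
have p3 : 0 <= e^+3 by nra.
have p5 : 0 <= e^+5 by rewrite exprn_ge0.
have p7 : 0 <= e^+7 by rewrite exprn_ge0.
have p9 : 0 <= e^+9 by rewrite exprn_ge0.
have q5 : 0 <= e^+5 * (1 - e) by apply: mulr_ge0; lra.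
have q7 : 0 <= e^+7 * (1 - e) by apply: mulr_ge0; lra.
have q9 : 0 <= e^+9 * (1 - e) by apply: mulr_ge0; lra.
have q3 : 0 <= e^+3 * (2/25 - e) by apply: mulr_ge0; lra.
have q2 : 0 <= e^+2 * (2/25 - e) by apply: mulr_ge0; lra.
have q1 : 0 <= e * (2/25 - e) by apply: mulr_ge0; lra.
have q11 : 0 <= e * (2/25 - e)^+2 by apply: mulr_ge0; nra.
have q12 : 0 <= (2/25 - e)^+3 by apply: exprn_ge0; lra.
nra.
Qed.

Lemma Npos (R : realFieldType) (q c s2 A : R) :
  c = 2*q^+2 - 1 -> s2 = 4*q^+2*(1-q^+2) -> 23/25 <= q -> q < 1 ->
  1/(q*c) <= A ->
  0 < -64*c^+2 - 30 - 30*A - 210*(c^+2/s2)*(1-A).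
Proof.
move=> hc hs q0 q1 hA.
have c0 : 0 < c by rewrite hc; nra.
have qpos : 0 < q by lra.
have s0 : 0 < s2 by rewrite hs; apply: mulr_gt0; nra.
have Q : 4/5 <= q^+2 by nra.
have k : 7*c^+2 >= s2.
  rewrite hc hs; have := sqr_ge0 (q^+2 - 4/5); nra.
have coef : 0 <= 210*(c^+2/s2) - 30.
  have hcs : c^+2/s2 * s2 = c^+2 by field; rewrite gt_eqF.
  move: (c^+2/s2) hcs => X hcs.
  have : 0 <= (7*X - 1) * s2 by nra.
  rewrite pmulr_lge0 //; lra.
have step : -64*c^+2 - 30 - 30*(1/(q*c)) - 210*(c^+2/s2)*(1-1/(q*c))
           <= -64*c^+2 - 30 - 30*A - 210*(c^+2/s2)*(1-A).
  have := ler_wpM2l coef hA => hh.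
  have e1 : forall B, -64*c^+2 - 30 - 30*B - 210*(c^+2/s2)*(1-B)
        = -64*c^+2 - 30 - 210*(c^+2/s2) + (210*(c^+2/s2) - 30) * B.
    move=> B; ring.
  rewrite !e1; lra.
apply: lt_le_trans step.
have hh := @hpos _ q q0 (ltW q1).
have idn : -64*c^+2 - 30 - 30*(1/(q*c)) - 210*(c^+2/s2)*(1-1/(q*c))
   = (1 - q) * (-4*(64*(2*q^+2-1)^+2+30)*(2*q^+2-1)*q^+3*(1+q) - 120*q^+2*(1+q) + 210*(2*q^+2-1)^+2*(1+2*q+2*q^+2)) / (s2 * q * c).
  rewrite hs hc; field.
  rewrite -hc (gt_eqF c0) (gt_eqF qpos) /=; apply: lt0r_neq0; nra.
rewrite idn; apply: divr_gt0; last by apply: mulr_gt0 => //; apply: mulr_gt0.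
apply: mulr_gt0 => //; lra.
Qed.

Section G.
Variable R : realFieldType.
Implicit Types a t c d u x : R.

Definition Sg t c : R := 2*t*c^+2.
Definition Cg c : R := 2*c^+2 - 1.
Definition sg t c : R := t*c.
Definition E1g a t c d u : R :=
  3 * (1 + Cg c) * d ^+ 2 + 8 * c * d * u + 6 * u ^+ 2 - 10 * (1 + a * (1 / Sg t c)).
Definition E2g a t c d u : R :=
  4 * d ^+ 6 - 24 * d ^+ 4 + 57 * d ^+ 2
  - 12 * (1 / c) * d * (d ^+ 2 - 3) * u
  + 9 * (1 / c) ^+ 2 * u ^+ 2
  + 105 * (1 / sg t c) ^+ 2 * (1 - a * (1 / Sg t c)).
Definition P1g a t c d : R :=
  - 32 * Sg t c ^+ 6 * d ^+ 12 + 256 * Sg t c ^+ 6 * d ^+ 10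
  - 1184 * Sg t c ^+ 6 * d ^+ 8
  - 96 * Sg t c ^+ 3 * (- 40 * a + 9 * Sg t c + 20 * (2 * Sg t c * Cg c)
                        + 7 * (3 * Sg t c - 4 * Sg t c ^+ 3) - 30 * a * Cg c) * d ^+ 6
  + 96 * Sg t c ^+ 3 * (- 160 * a + 99 * Sg t c + 80 * (2 * Sg t c * Cg c)
                        + 7 * (3 * Sg t c - 4 * Sg t c ^+ 3) - 120 * a * Cg c) * d ^+ 4
  + 13440 * (a - Sg t c) * Sg t c ^+ 5 * (1 / sg t c) ^+ 2 * d ^+ 2
  - 1800 * (6 * a + 8 * a * Cg c - 2 * Sg t c * (3 * Cg c + 4)) ^+ 2.
Definition Ag a t c : R := a / Sg t c.
Definition Kg a t c : R := 105 * (1 / t ^+ 2) * (1 - Ag a t c).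
Definition Mg a t c x : R :=
  18 * c^+2 * x - 30 * (1 + Ag a t c) - 2 * c^+2 * (4 * x^+3 - 24 * x^+2 + 57 * x) - 2 * Kg a t c.
Definition Ug a t c d : R := - Mg a t c (d^+2) / (24 * c * d * (d^+2 - 2)).
Definition Rt0 c d A M E : R :=
  6*c^+2*d^+2*(576*c^+2*d^+2*E^+2) - 8*24*c^+2*d^+2*E*M + 6*M^+2 - 10*(1+A)*576*c^+2*d^+2*E^+2.
Definition Rt a t c d : R := Rt0 c d (Ag a t c) (Mg a t c (d^+2)) (d^+2 - 2).

Lemma keyg a t c d : 0 < t -> 0 < c -> c^+2 = 1/(1+t^+2) ->
  P1g a t c d = -(16/3) * t^+6 * c^+8 * Rt a t c d.
Proof.
move=> t0 c0 hc.
have t1 : 1 + t^+2 != 0 by apply: lt0r_neq0; nra.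
rewrite /P1g /Rt /Rt0 /Mg /Kg /Ag /Cg /Sg /sg.
have -> : c^+8 = (c^+2)^+4 by rewrite -exprM.
rewrite expr_div_n expr1n [(t*c)^+2]exprMn.
rewrite hc.
field.
by rewrite t1 (gt_eqF t0).
Qed.

Lemma lin_id a t c d u : 0 < t -> 0 < c ->
  3 * E1g a t c d u - 2 * c^+2 * E2g a t c d u = 24 * c * d * (d^+2 - 2) * u + Mg a t c (d^+2).
Proof.
move=> t0 c0; rewrite /E1g /E2g /Mg /Kg /Ag /Cg /Sg /sg.
field; by rewrite (gt_eqF t0) (gt_eqF c0).
Qed.

Lemma E1U a t c d : 0 < t -> 0 < c -> 0 < d -> d^+2 - 2 != 0 ->
  E1g a t c d (Ug a t c d) = Rt a t c d / (576 * c^+2 * d^+2 * (d^+2 - 2)^+2).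
Proof.
move=> t0 c0 d0 e0; rewrite /E1g /Ug /Rt /Rt0 /Cg.
move: (Mg a t c (d^+2)) => M.
rewrite /Ag /Sg.
field; by rewrite e0 (gt_eqF t0) (gt_eqF c0) (gt_eqF d0).
Qed.

Lemma Rt2 a t c d : d^+2 = 2 -> Rt a t c d = 6 * (Mg a t c 2)^+2.
Proof. by move=> h; rewrite /Rt /Rt0 h subrr; ring. Qed.

Lemma fwd a t c d u : 0 < t -> 0 < c -> c^+2 = 1/(1+t^+2) -> Mg a t c 2 != 0 ->
  0 < d -> E1g a t c d u = 0 -> E2g a t c d u = 0 ->
  P1g a t c d = 0 /\ u = Ug a t c d.
Proof.
move=> t0 c0 hc hN d0 h1 h2.
have L := lin_id a t c d u t0 c0; rewrite h1 h2 !(mulr0, subr0) in L.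
have e0 : d^+2 - 2 != 0.
  apply/negP => /eqP e0; move: L; rewrite e0 !(mulr0, mul0r, add0r).
  have -> : d^+2 = 2 by apply/eqP; rewrite -subr_eq0 e0.
  by move/esym/eqP; rewrite (negbTE hN).
have D0 : 24 * c * d * (d^+2 - 2) != 0.
  by rewrite !mulf_neq0 // ?gt_eqF.
have hu : u = Ug a t c d.
  rewrite /Ug; apply: (mulfI D0); rewrite mulrCA mulfV // mulr1.
  move: L; move: (24 * c * d * (d ^+ 2 - 2)) (Mg a t c (d ^+ 2)) => X Y L.
  by apply/eqP; rewrite -addr_eq0 -L.
split=> //.
rewrite (keyg a t c d t0 c0 hc).
have : E1g a t c d (Ug a t c d) = 0 by rewrite -hu.
rewrite (E1U a t c d t0 c0 d0 e0) => /eqP; rewrite mulf_eq0 invr_eq0 => /orP [/eqP -> | ]; first by rewrite mulr0.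
by rewrite !mulf_eq0 (gt_eqF c0) (gt_eqF d0) (negbTE e0) !orbF => /eqP; lra.
Qed.

Lemma bwd a t c d : 0 < t -> 0 < c -> c^+2 = 1/(1+t^+2) -> Mg a t c 2 != 0 ->
  0 < d -> P1g a t c d = 0 ->
  E1g a t c d (Ug a t c d) = 0 /\ E2g a t c d (Ug a t c d) = 0.
Proof.
move=> t0 c0 hc hN d0 hp.
rewrite (keyg a t c d t0 c0 hc) in hp.
have hR : Rt a t c d = 0.
  have k0 : -(16/3)*t^+6*c^+8 != 0.
    have tp : 0 < t^+6 * c^+8 by apply: mulr_gt0; apply: exprn_gt0.
    by rewrite -mulrA mulNr oppr_eq0 gt_eqF // mulr_gt0 // divr_gt0.
  by move/eqP: hp; rewrite mulf_eq0 (negbTE k0) /= => /eqP.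
have e0 : d^+2 - 2 != 0.
  apply/negP => /eqP e0.
  have e2 : d^+2 = 2 by apply/eqP; rewrite -subr_eq0 e0.
  by move: hR; rewrite Rt2 // => /eqP; rewrite !mulf_eq0 (negbTE hN) !orbF => /eqP; lra.
have h1 : E1g a t c d (Ug a t c d) = 0 by rewrite (E1U a t c d t0 c0 d0 e0) hR mul0r.
split=> //.
have L := lin_id a t c d (Ug a t c d) t0 c0.
rewrite h1 mulr0 sub0r in L.
have : 24 * c * d * (d ^+ 2 - 2) * Ug a t c d + Mg a t c (d ^+ 2) = 0.
  rewrite /Ug mulrCA mulfV ?mulr1 ?addNr //.
  by rewrite !mulf_neq0 // ?gt_eqF.
by rewrite -L => /eqP; rewrite oppr_eq0 !mulf_eq0 (gt_eqF c0) !orbF => /orP [] /eqP //; lra.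
Qed.
End G.
Arguments Sg {R}. Arguments Cg {R}. Arguments sg {R}. Arguments E1g {R}. Arguments E2g {R}.
Arguments P1g {R}. Arguments Ag {R}. Arguments Kg {R}. Arguments Mg {R}. Arguments Ug {R}.
Arguments Rt0 {R}. Arguments Rt {R}. Arguments fwd {R}. Arguments bwd {R}.

Theorem theorem1 (R : realType) (a : R) (ha0 : 0 < a) (ha1 : a <= pi / 2) :
  card_eq [set du : R * R | 0 < du.1 /\ eq1 a du.1 du.2 = 0 /\ eq2 a du.1 du.2 = 0]
          [set x : R | 0 < x /\ p a x = 0].
Proof.
have pi0 : 0 < (pi : R) := pi_gt0 R.
have a2 : a / 2 = (a / 4) *+ 2 by rewrite mulr2n; field.
have a1 : a = (a / 2) *+ 2 by rewrite mulr2n; field.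
have h2a : 2 * a = a *+ 2 by rewrite mulr2n; ring.
have h3a : 3 * a = a *+ 2 + a by rewrite mulr2n; ring.
have hSa : sin a = 2 * sin (a/2) * cos (a/2).
  by rewrite {1}a1 sin_mulr2n mulr2n; ring.
have hCa : cos a = 2 * cos (a/2) ^+ 2 - 1.
  by rewrite {1}a1 cos_mulr2n mulr2n; ring.
have hs2 : sin (a/2) = 2 * sin (a/4) * cos (a/4).
  by rewrite a2 sin_mulr2n mulr2n; ring.
have hc2 : cos (a/2) = 2 * cos (a/4) ^+ 2 - 1.
  by rewrite a2 cos_mulr2n mulr2n; ring.
have hS2a : sin (2 * a) = 2 * sin a * cos a.
  by rewrite h2a sin_mulr2n mulr2n; ring.
have hS3a : sin (3 * a) = 3 * sin a - 4 * sin a ^+ 3.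
  rewrite h3a sinD sin_mulr2n cos_mulr2n !mulr2n.
  have h := cos2Dsin2 a.
  have h' : cos a ^+ 2 * sin a = (1 - sin a ^+ 2) * sin a by rewrite -h; ring.
  lra.
have hCa0 : 0 <= cos a by apply: cos_ge0_pihalf; apply/andP; split; lra.
have c0 : 0 < cos (a/2) by apply: cos_gt0_pihalf; apply/andP; split; lra.
have s0 : 0 < sin (a/2) by apply: sin_gt0_pi; apply/andP; split; lra.
have q0 : 0 < cos (a/4) by apply: cos_gt0_pihalf; apply/andP; split; lra.
have r0 : 0 < sin (a/4) by apply: sin_gt0_pi; apply/andP; split; lra.
have hsc : sin (a/2) ^+ 2 + cos (a/2) ^+ 2 = 1 by rewrite addrC cos2Dsin2.
have hqr : sin (a/4) ^+ 2 + cos (a/4) ^+ 2 = 1 by rewrite addrC cos2Dsin2.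
have ar : 4 * sin (a/4) <= a.
  have h : 0 <= a / 4 by lra.
  have := @sin_le_id R (a/4) h; lra.
set s := sin (a/2) in hSa hs2 s0 hsc *.
set c := cos (a/2) in hSa hCa hc2 c0 hsc *.
set q := cos (a/4) in hs2 hc2 q0 hqr *.
set r := sin (a/4) in hs2 r0 ar hqr *.
pose t := s / c.
have c2 : c ^+ 2 = 1 / (1 + t ^+ 2).
  have e : 1 + t ^+ 2 = (s ^+ 2 + c ^+ 2) / c ^+ 2.
    by rewrite /t; field; rewrite gt_eqF.
  by rewrite e hsc; field; rewrite gt_eqF.
have t0 : 0 < t by rewrite /t divr_gt0.
have hsg : s = sg t c by rewrite /sg /t divfK // gt_eqF.
have hSg : sin a = Sg t c by rewrite hSa /Sg hsg /sg; ring.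
have hCg : cos a = Cg c by rewrite hCa.
have eq1E d u : eq1 a d u = E1g a t c d u.
  by rewrite /E1g -hSg -hCg.
have eq2E d u : eq2 a d u = E2g a t c d u.
  by rewrite /E2g -hSg -hsg.
have p1E d : p1 a d = P1g a t c d.
  by rewrite /P1g -hSg -hCg -hS3a -hS2a -hsg.
have hN : Mg a t c 2 != 0.
  have hA : 1/(q*c) <= Ag a t c.
    rewrite /Ag -hSg hSa hs2.
    have e : a / (2*(2*r*q)*c) - 1/(q*c) = (a - 4*r)/(4*r*q*c).
      by field; rewrite !gt_eqF.
    rewrite -subr_ge0 e divr_ge0 // ?subr_ge0 //.
    by apply: ltW; rewrite !mulr_gt0.
  have hc' : c = 2*q^+2 - 1 by [].
  have hr2 : r^+2 = 1 - q^+2 by lra.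
  have hs' : s^+2 = 4*q^+2*(1-q^+2).
    rewrite hs2; have -> : (2*r*q)^+2 = 4*r^+2*q^+2 by ring.
    rewrite hr2; ring.
  have c7 : 7/10 <= c by nra.
  have hq1 : 23/25 <= q by nra.
  have hq2 : q < 1 by nra.
  have := @Npos _ _ _ _ _ hc' hs' hq1 hq2 hA.
  have -> : Mg a t c 2 = -64*c^+2 - 30 - 30*Ag a t c - 210*(c^+2/s^+2)*(1-Ag a t c).
    rewrite /Mg /Kg /t; move: (Ag a t c) => A.
    by field; rewrite !gt_eqF.
  by move=> h; rewrite gt_eqF.
apply/pcard_eqP; apply/bijPex; exists (fun du : R * R => du.1 ^+ 2); split.
- move=> [d u] /= [d0 [h1 h2]].
  rewrite eq1E in h1; rewrite eq2E in h2.
  have [hp hu] := fwd a t c d u t0 c0 c2 hN d0 h1 h2.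
  split; first exact: exprn_gt0.
  by rewrite /p sqrtr_sqr ger0_norm ?ltW // p1E.
- move=> [d1 u1] [d2 u2]; rewrite !inE /= => -[d10 [h11 h12]] -[d20 [h21 h22]] hd.
  rewrite eq1E in h11; rewrite eq2E in h12; rewrite eq1E in h21; rewrite eq2E in h22.
  have [_ hu1] := fwd a t c d1 u1 t0 c0 c2 hN d10 h11 h12.
  have [_ hu2] := fwd a t c d2 u2 t0 c0 c2 hN d20 h21 h22.
  have e : d1 = d2.
    by move/eqP: hd; rewrite eqrXn2 ?ltW // => /eqP.
  by rewrite hu1 hu2 e.
- move=> x /= [x0 hx].
  have sd : 0 < Num.sqrt x by rewrite sqrtr_gt0.
  have hp : P1g a t c (Num.sqrt x) = 0 by rewrite -p1E.
  have [h1 h2] := bwd a t c _ t0 c0 c2 hN sd hp.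
  exists (Num.sqrt x, Ug a t c (Num.sqrt x)); last by rewrite /= sqr_sqrtr // ltW.
  by split => //=; rewrite eq1E eq2E.
Qed.
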